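(* Let $n\ge 2$ and let $\rho$ be an $n$-qubit entangled symmetric state. For a collection $\mathcal S$ of subsets of $[n]$: (a) $\mathcal S$ determines $\rho$ if and only if the hypergraph $([n],\mathcal S)$ is connected and there exists $S\in\mathcal S$ with $|S|\ge L(\rho)$; (b) $\mathcal S$ detects $\rho$'s GME if and only if the hypergraph $([n],\mathcal S)$ is connected and there exists $S\in\mathcal S$ with $|S|\ge l(\rho)$.
   Context: Let $[n]=\{1,\dots,n\}$, $\mathcal H_{[n]}=\bigotimes_{i=1}^n\mathcal H_i$ with $\mathcal H_i\cong\mathbb C^2$; for $S\subseteq[n]$, $\mathcal H_S=\bigotimes_{j\in S}\mathcal H_j$ and $\rho_S=\mathrm{Tr}_{[n]\setminus S}\rho$. A pure state is biseparable if it equals $|\alpha\rangle_S\otimes|\beta\rangle_{\bar S}$ for some $\emptyset\ne S\subsetneq[n]$, and fully separable if it is separable with respect to every bipartition; mixed states are biseparable (fully separable) if they are convex combinations of biseparable (fully separable) pure states; entangled means not fully separable; genuinely entangled means not biseparable. $\mathcal C(\rho,\mathcal S)=\{\sigma:\sigma_S=\rho_S\ \forall S\in\mathcal S\}$ (over all density matrices $\sigma$ on $\mathcal H_{[n]}$). $\mathcal S$ determines $\rho$ if $\mathcal C(\rho,\mathcal S)=\{\rho\}$ and detects $\rho$'s GME if every element of $\mathcal C(\rho,\mathcal S)$ is genuinely entangled. $L(\rho)=\min_{\mathcal S\text{ determines }\rho}\max_{S\in\mathcal S}|S|$ and, for genuinely entangled $\rho$, $l(\rho)=\min_{\mathcal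 S\text{ detects }\rho\text{'s GME}}\max_{S\in\mathcal S}|S|$. A state is symmetric if its range lies in the subspace of vectors invariant under swapping any two qubits (an entangled symmetric state is genuinely entangled). The hypergraph $([n],\mathcal S)$ is connected if for every partition of $[n]$ into nonempty sets $X,Y$ some $S\in\mathcal S$ intersects both $X$ and $Y$. *)

(* Defs.v *)
From HB Require Import structures.
From mathcomp Require Import all_boot all_order all_algebra.
From mathcomp Require Import complex.
From mathcomp Require Import boolp reals.
Set Implicit Arguments. Unset Strict Implicit. Unset Printing Implicit Defensive.
Import Order.TTheory GRing.Theory Num.Theory.
Local Open Scope ring_scope.
Local Open Scope complex_scope.

Section QubitDefs.
Variable R : realType.
Local Notation C := R[i].

(* computational basis of H_[n] = (C^2)^{\otimes n}: bit strings [n] -> {0,1} *)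
Definition bits (n : nat) := {ffun 'I_n -> bool}.

(* vectors of H_[n] and operators on H_[n] (matrix entries <x|A|y>) *)
Definition Vec (n : nat) := bits n -> C.
Definition Op (n : nat) := bits n -> bits n -> C.

Definition apply_op n (A : Op n) (v : Vec n) : Vec n :=
  fun x => \sum_(y : bits n) A x y * v y.

Definition hermitian n (A : Op n) : Prop := forall x y, A y x = (A x y)^*.

Definition psd n (A : Op n) : Prop :=
  forall v : Vec n, 0 <= \sum_(x : bits n) \sum_(y : bits n) (v x)^* * A x y * v y.

Definition trace n (A : Op n) : C := \sum_(x : bits n) A x x.

Definition density n (rho : Op n) : Prop :=
  hermitian rho /\ psd rho /\ trace rho = 1.

Definition merge n (S : {set 'I_n}) (x c : bits n) : bits n :=
  [ffun i => if i \in S then x i else c i].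

(* the reduced state rho_S = Tr_{[n]\S} rho, written as an operator whose
   entries <x|rho_S|y> only depend on the restrictions of x, y to S:
   <x_S|rho_S|y_S> = sum over bit strings c of [n]\S of <x_S c|rho|y_S c>. *)
Definition reduced n (S : {set 'I_n}) (rho : Op n) : Op n :=
  fun x y => \sum_(c : bits n | [forall i, (i \in S) ==> ~~ c i])
               rho (merge S x c) (merge S y c).

Definition same_marginal n (S : {set 'I_n}) (sigma rho : Op n) : Prop :=
  forall x y : bits n, reduced S sigma x y = reduced S rho x y.

(* f : Vec n is (the image of) a vector of H_S, i.e. depends only on the
   S-coordinates of the basis index *)
Definition depends_only_on n (S : {set 'I_n}) (f : Vec n) : Prop :=
  forall x y : bits n, (forall i, i \in S -> x i = y i) -> f x = f y.

Definition normalized n (psi : Vec n) : Prop :=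
  \sum_(x : bits n) (psi x)^* * psi x = 1.

Definition proj n (psi : Vec n) : Op n := fun x y => psi x * (psi y)^*.

Definition product_wrt n (S : {set 'I_n}) (psi : Vec n) : Prop :=
  exists alpha beta : Vec n,
    [/\ depends_only_on S alpha, depends_only_on (~: S) beta &
        forall x, psi x = alpha x * beta x].

Definition proper_nonempty n (S : {set 'I_n}) : bool := (S != set0) && (S != setT).

Definition biseparable_pure n (psi : Vec n) : Prop :=
  normalized psi /\ exists S : {set 'I_n}, proper_nonempty S /\ product_wrt S psi.

Definition fully_separable_pure n (psi : Vec n) : Prop :=
  normalized psi /\ forall S : {set 'I_n}, proper_nonempty S -> product_wrt S psi.

Definition convex_comb_of n (P : Vec n -> Prop) (rho : Op n) : Prop :=
  exists (m : nat) (p : 'I_m -> C) (psi : 'I_m -> Vec n),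
    [/\ forall k, 0 <= p k, \sum_(k < m) p k = 1, forall k, P (psi k) &
        forall x y, rho x y = \sum_(k < m) p k * proj (psi k) x y].

Definition biseparable n (rho : Op n) : Prop := convex_comb_of (@biseparable_pure n) rho.
Definition fully_separable n (rho : Op n) : Prop :=
  convex_comb_of (@fully_separable_pure n) rho.
Definition entangled n (rho : Op n) : Prop := ~ fully_separable rho.
Definition genuinely_entangled n (rho : Op n) : Prop := ~ biseparable rho.

Definition swap_bits n (i j : 'I_n) (x : bits n) : bits n :=
  [ffun k => x (if k == i then j else if k == j then i else k)].

(* the range of rho lies in the symmetric subspace *)
Definition symmetric_state n (rho : Op n) : Prop :=
  forall (v : Vec n) (i j : 'I_n) (x : bits n),
    apply_op rho v (swap_bits i j x) = apply_op rho v x.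

Definition compatible n (rho : Op n) (Ss : {set {set 'I_n}}) (sigma : Op n) : Prop :=
  density sigma /\ forall S, S \in Ss -> same_marginal S sigma rho.

Definition determines n (Ss : {set {set 'I_n}}) (rho : Op n) : Prop :=
  forall sigma, compatible rho Ss sigma -> sigma = rho.

Definition detects_GME n (Ss : {set {set 'I_n}}) (rho : Op n) : Prop :=
  forall sigma, compatible rho Ss sigma -> genuinely_entangled sigma.

Definition max_size n (Ss : {set {set 'I_n}}) : nat := (\max_(S in Ss) #|S|)%N.

(* L(rho): minimum over all determining collections of the max size.
   The collection {[n]} always determines rho, so the minimum is <= n and
   the default value n of the fold is harmless. *)
Definition Lmin n (rho : Op n) : nat :=
  \big[minn/n]_(Ss : {set {set 'I_n}} | `[< determines Ss rho >]) max_size Ss.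

(* l(rho): same with detection of GME (meaningful for genuinely entangled rho,
   for which {[n]} detects GME, so again the default n is harmless). *)
Definition lmin n (rho : Op n) : nat :=
  \big[minn/n]_(Ss : {set {set 'I_n}} | `[< detects_GME Ss rho >]) max_size Ss.

End QubitDefs.

Definition hconnected n (Ss : {set {set 'I_n}}) : Prop :=
  forall X Y : {set 'I_n}, X != set0 -> Y != set0 -> X :&: Y = set0 -> X :|: Y = setT ->
    exists2 S, S \in Ss & (S :&: X != set0) && (S :&: Y != set0).

(* Main.v *)
Require Import Defs.
From HB Require Import structures.
From mathcomp Require Import all_boot all_order all_algebra.
From mathcomp Require Import complex.
From mathcomp Require Import boolp reals.
From mathcomp Require Import ring.
Require Import Defs.
Set Implicit Arguments. Unset Strict Implicit. Unset Printing Implicit Defensive.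
Import Order.TTheory GRing.Theory Num.Theory.
Local Open Scope ring_scope.

Section Bits.
Variable n : nat.

Definition tp (i j k : 'I_n) : 'I_n := if k == i then j else if k == j then i else k.

Lemma tpK (i j : 'I_n) : involutive (tp i j).
Proof.
move=> k; rewrite /tp.
case: (eqVneq k i) => [->|ki]; first by rewrite eqxx; case: eqVneq => [->|] //.
case: (eqVneq k j) => [->|kj]; first by rewrite eqxx.
by rewrite (negbTE ki) (negbTE kj).
Qed.

Lemma swap_bitsE (i j : 'I_n) (x : bits n) k : swap_bits i j x k = x (tp i j k).
Proof. by rewrite /swap_bits ffunE. Qed.

Lemma swap_bitsK (i j : 'I_n) : involutive (@swap_bits n i j).
Proof. by move=> x; apply/ffunP => k; rewrite !swap_bitsE tpK. Qed.

Lemma swap_bits_id (i : 'I_n) (x : bits n) : swap_bits i i x = x.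
Proof. by apply/ffunP => k; rewrite swap_bitsE /tp; case: eqVneq => [->|]. Qed.

Definition zeroOn (A : {set 'I_n}) (c : bits n) := [forall k, (k \in A) ==> ~~ c k].

Lemma zeroOnP (A : {set 'I_n}) (c : bits n) : reflect (forall k, k \in A -> c k = false) (zeroOn A c).
Proof.
apply: (iffP forallP) => [H k kA|H k]; first by move: (H k); rewrite kA /= => /negbTE.
by apply/implyP => /H ->.
Qed.

Definition z0 : bits n := [ffun => false].

Lemma mergeE (S : {set 'I_n}) (x c : bits n) k : merge S x c k = if k \in S then x k else c k.
Proof. by rewrite /merge ffunE. Qed.

Lemma sum_split (V : nmodType) (D T : {set 'I_n}) (F : bits n -> V) : D \subset T ->
  \sum_(c | zeroOn D c) F c =
  \sum_(e | zeroOn D e && zeroOn (~: T) e) \sum_(c | zeroOn T c) F (merge T e c).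
Proof.
move=> DT.
rewrite (partition_big (fun c => merge T c z0) (fun e => zeroOn D e && zeroOn (~: T) e)); last first.
  move=> c /zeroOnP H; apply/andP; split; apply/zeroOnP => k kA; rewrite mergeE.
    by rewrite (subsetP DT _ kA) H.
  by move: kA; rewrite inE => /negbTE ->; rewrite ffunE.
apply: eq_bigr => e /andP [/zeroOnP eD /zeroOnP eT].
rewrite (reindex_onto (fun c => merge T e c) (fun c => merge T z0 c)); last first.
  move=> c /andP [_ /eqP <-]; apply/ffunP => k; rewrite !mergeE; by case: (k \in T).
apply: eq_bigl => c; apply/idP/idP.
  move=> /andP [_ /eqP E]; apply/zeroOnP => k kT.
  by move/ffunP: E => /(_ k); rewrite !mergeE kT ffunE => <-.
move=> /zeroOnP cT; apply/andP; split.
  apply/andP; split.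
    apply/zeroOnP => k kD; rewrite mergeE (subsetP DT _ kD); exact: eD.
  apply/eqP/ffunP => k; rewrite !mergeE; case kT: (k \in T) => //.
  by rewrite ffunE eT // inE kT.
apply/eqP/ffunP => k; rewrite !mergeE; case kT: (k \in T) => //.
by rewrite ffunE cT.
Qed.

Lemma zeroOn0 (c : bits n) : zeroOn set0 c.
Proof. by apply/zeroOnP => k; rewrite inE. Qed.

Lemma sum_split0 (V : nmodType) (T : {set 'I_n}) (F : bits n -> V) :
  \sum_c F c = \sum_(e | zeroOn (~: T) e) \sum_(c | zeroOn T c) F (merge T e c).
Proof.
rewrite -(eq_bigl _ _ (@zeroOn0)) (sum_split _ (sub0set T)).
by apply: eq_bigl => e; rewrite zeroOn0.
Qed.

End Bits.

Section Decomp.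
Variable R : realType.
Local Notation C := R[i].
Variable n : nat.

Lemma conjcE (x : C) : conjc x = x^*.
Proof. by []. Qed.

Lemma sum_enum (V : nmodType) (T : finType) (F : T -> V) :
  \sum_(x : T) F x = \sum_(i < #|T|) F (enum_val i).
Proof. by rewrite -big_enum_val; apply: eq_bigl. Qed.

Lemma decomp (rho : Op R n) : hermitian rho -> psd rho ->
  exists m (p : 'I_m -> C) (u : 'I_m -> Vec R n),
    (forall k, 0 <= p k) /\ forall x y, rho x y = \sum_(k < m) p k * (u k x * (u k y)^*).
Proof.
move=> Hh Hp.
pose A : 'M[C]_#|bits n| := \matrix_(i, j) rho (enum_val i) (enum_val j).
have AH : (A ^t*)%sesqui = A.
  by apply/matrixP => i j; rewrite !mxE Hh conjcE conjCK.
have An : A \is normalmx by rewrite qualifE AH eqxx.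
have U := spectral_unitarymx A.
move/orthomx_spectralP: An; rewrite (invmx_unitary U).
set P := spectralmx A; set sp := spectral_diag A => EA.
have UP : P *m (P ^t*)%sesqui = 1%:M by apply/unitarymxP.
exists #|bits n|, (fun k => sp 0 k), (fun k x => (P k (enum_rank x))^*); split.
  move=> k.
  have E : P *m A *m (P ^t*)%sesqui = diag_mx sp.
    by rewrite EA !mulmxA UP mul1mx -!mulmxA UP mulmx1.
  have -> : sp 0 k = (P *m A *m (P ^t*)%sesqui) k k by rewrite E mxE eqxx mulr1n.
  move: (Hp (fun x => (P k (enum_rank x))^*)).
  rewrite sum_enum.
  under eq_bigr => i _ do rewrite sum_enum.
  rewrite !mxE.
  under [X in _ -> _ <= X]eq_bigr => j _ do rewrite !mxE.
  rewrite exchange_big /=.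
  move=> H; apply: (le_trans H); rewrite le_eqVlt; apply/orP; left; apply/eqP.
  apply: eq_bigr => j _; rewrite big_distrl /=; apply: eq_bigr => i _.
  by rewrite !enum_valK !mxE conjCK.
move=> x y.
have -> : rho x y = A (enum_rank x) (enum_rank y) by rewrite mxE !enum_rankK.
rewrite EA mxE; apply: eq_bigr => k _.
by rewrite mul_mx_diag !mxE conjCK mulrCA mulrA.
Qed.

End Decomp.

Section Inv.
Variable R : realType.
Local Notation C := R[i].
Variable n : nat.

Lemma sum_diff_sq (u : Vec R n) (f : bits n -> bits n) : involutive f ->
  \sum_x (u x - u (f x)) * (u x - u (f x))^* =
  (\sum_x (u x * (u x)^* - u (f x) * (u x)^*)) *+ 2.
Proof.
move=> fK.
have E1 : \sum_x u (f x) * (u (f x))^* = \sum_x u x * (u x)^*.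
  by rewrite [RHS](reindex_inj (can_inj fK)).
have E2 : \sum_x u x * (u (f x))^* = \sum_x u (f x) * (u x)^*.
  by rewrite [RHS](reindex_inj (can_inj fK)); apply: eq_bigr => x _; rewrite fK.
under eq_bigr => x _ do rewrite rmorphB /= mulrBl !mulrBr.
by rewrite !sumrB E1 E2 mulr2n opprB.
Qed.

Lemma inv_from_D m (p : 'I_m -> C) (u : 'I_m -> Vec R n) (f : bits n -> bits n) (A : Op R n) :
  involutive f -> (forall k, 0 <= p k) ->
  (forall x y, A x y = \sum_(k < m) p k * (u k x * (u k y)^*)) ->
  \sum_x (A x x - A (f x) x) = 0 ->
  forall k, p k != 0 -> forall x, u k (f x) = u k x.
Proof.
move=> fK p0 EA D0 k pk x.
have E : \sum_(k < m) p k * \sum_x (u k x - u k (f x)) * (u k x - u k (f x))^* = 0.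
  under eq_bigr => j _ do rewrite sum_diff_sq // mulrnAr.
  rewrite sumrMnl; apply/eqP; rewrite mulrn_eq0 /=; apply/eqP.
  apply: (etrans _ D0); under [RHS]eq_bigr => y _ do rewrite !EA -sumrB.
  rewrite [RHS]exchange_big; apply: eq_bigr => j _; rewrite mulr_sumr; apply: eq_bigr => y _.
  by rewrite -mulrBr.
have ge0 : forall j : 'I_m, true -> 0 <= p j * \sum_x (u j x - u j (f x)) * (u j x - u j (f x))^*.
  move=> j _; apply: mulr_ge0 => //; apply: sumr_ge0 => y _; exact: mul_conjC_ge0.
have := psumr_eq0P ge0 E (i:=k) isT; move/eqP; rewrite mulf_eq0 (negbTE pk) /= => /eqP E2.
have : (u k x - u k (f x)) * (u k x - u k (f x))^* = 0.
  by apply: (psumr_eq0P _ E2) => // y _; exact: mul_conjC_ge0.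
by move/eqP; rewrite mul_conjC_eq0 subr_eq0 => /eqP ->.
Qed.

End Inv.

Section Marg.
Variable R : realType.
Local Notation C := R[i].
Variable n : nat.
Implicit Types (A B : Op R n) (S D T : {set 'I_n}) (x y c e : bits n).

Lemma tp_out (i j k : 'I_n) : k != i -> k != j -> tp i j k = k.
Proof. by move=> ki kj; rewrite /tp (negbTE ki) (negbTE kj). Qed.

Lemma tp_in S (i j k : 'I_n) : i \in S -> j \in S -> (tp i j k \in S) = (k \in S).
Proof.
move=> iS jS; rewrite /tp; case: (eqVneq k i) => [->|_]; first by rewrite iS jS.
by case: (eqVneq k j) => [->|_]; rewrite ?iS ?jS.
Qed.

Lemma merge_swap S (i j : 'I_n) x c : i \in S -> j \in S ->
  swap_bits i j (merge S x c) = merge S (swap_bits i j x) c.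
Proof.
move=> iS jS; apply/ffunP => k; rewrite swap_bitsE !mergeE swap_bitsE tp_in //.
case kS: (k \in S) => //; rewrite tp_out //; apply/eqP => E; by rewrite E ?iS ?jS in kS.
Qed.

Definition Dq (i j : 'I_n) A := \sum_x (A x x - A (swap_bits i j x) x).

Lemma Dq_marg S (i j : 'I_n) A : i \in S -> j \in S ->
  Dq i j A = \sum_(e | zeroOn (~: S) e) (reduced S A e e - reduced S A (swap_bits i j e) e).
Proof.
move=> iS jS; rewrite /Dq (sum_split0 S); apply: eq_bigr => e _.
rewrite /reduced -sumrB; apply: eq_bigr => c _.
by rewrite merge_swap.
Qed.

Lemma Dq_same S (i j : 'I_n) A B : i \in S -> j \in S -> same_marginal S A B ->
  Dq i j A = Dq i j B.
Proof.
move=> iS jS H; rewrite (@Dq_marg S i j A iS jS) (@Dq_marg S i j B iS jS); apply: eq_bigr => e _; by rewrite !H.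
Qed.

Lemma merge_merge D T x e c : D \subset T ->
  merge D x (merge T e c) = merge T (merge D x e) c.
Proof.
move=> DT; apply/ffunP => k; rewrite !mergeE.
case kD: (k \in D); first by rewrite (subsetP DT _ kD).
by case: (k \in T).
Qed.

Lemma same_marg_sub D T A B : D \subset T -> same_marginal T A B -> same_marginal D A B.
Proof.
move=> DT H x y; rewrite /reduced !(sum_split _ DT); apply: eq_bigr => e _.
under eq_bigr => c _ do rewrite !merge_merge //.
under [RHS]eq_bigr => c _ do rewrite !merge_merge //.
exact: H.
Qed.

Lemma mem_tp_imset D (i j k : 'I_n) : (k \in tp i j @: D) = (tp i j k \in D).
Proof.
apply/imsetP/idP => [[k' kD ->]|H]; first by rewrite tpK.
by exists (tp i j k); rewrite ?tpK.
Qed.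

Lemma zeroOn_swap D (i j : 'I_n) c : zeroOn (tp i j @: D) (swap_bits i j c) = zeroOn D c.
Proof.
apply/zeroOnP/zeroOnP => H k.
  move=> kD; move: (H (tp i j k)); rewrite mem_tp_imset tpK swap_bitsE tpK; exact.
by rewrite mem_tp_imset swap_bitsE => /H.
Qed.

Lemma merge_swap_img D (i j : 'I_n) x c :
  merge (tp i j @: D) (swap_bits i j x) (swap_bits i j c) = swap_bits i j (merge D x c).
Proof.
by apply/ffunP => k; rewrite !mergeE !swap_bitsE mergeE mem_tp_imset.
Qed.

Definition sym2 A := forall (i j : 'I_n) x y, A (swap_bits i j x) (swap_bits i j y) = A x y.

Lemma reduced_swap D (i j : 'I_n) A x y : sym2 A ->
  reduced (tp i j @: D) A (swap_bits i j x) (swap_bits i j y) = reduced D A x y.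
Proof.
move=> sA; rewrite /reduced (reindex_inj (can_inj (swap_bitsK i j))) /=.
apply: eq_big => [c|c _]; first exact: zeroOn_swap.
by rewrite !merge_swap_img sA.
Qed.

Lemma same_marg_card D T A B : sym2 A -> sym2 B -> same_marginal T A B ->
  (#|D| <= #|T|)%N -> same_marginal D A B.
Proof.
move=> sA sB H.
move: {2}#|D :\: T| (leqnn #|D :\: T|) => m; elim: m D => [|m IH] D.
  rewrite leqn0 cards_eq0 setD_eq0 => DT _; exact: same_marg_sub DT H.
move=> Hm DT.
have [sub|nsub] := boolP (D \subset T); first exact: same_marg_sub sub H.
have : (0 < #|D :\: T|)%N by rewrite card_gt0 setD_eq0.
case/card_gt0P => a; rewrite inE => /andP [aT aD].
have : (0 < #|T :\: D|)%N.
  have E1 := cardsID T D; have E2 := cardsID D T.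
  rewrite setIC in E2.
  move: DT; rewrite -E1 -E2 leq_add2l => /(leq_trans _); apply.
  by rewrite card_gt0; apply/set0Pn; exists a; rewrite inE aT aD.
case/card_gt0P => b; rewrite inE => /andP [bD bT].
have ab : a != b by apply/eqP => E; rewrite E bT in aT.
have Hb : forall k, k \in tp a b @: D -> k \notin T -> k \in D /\ k != a.
  move=> k; rewrite mem_tp_imset => kD kT.
  case: (eqVneq k a) => [E|ka]; first by move: kD; rewrite E /tp eqxx (negbTE bD).
  case: (eqVneq k b) => [E|kb]; first by rewrite E bT in kT.
  by move: kD; rewrite tp_out.
have HD' : same_marginal (tp a b @: D) A B.
  apply: IH; last by rewrite card_imset //; exact: (can_inj (tpK a b)).
  rewrite -ltnS; apply: leq_trans Hm; apply: proper_card.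
  rewrite properEneq; apply/andP; split.
    apply/eqP => E; have : a \in tp a b @: D :\: T by rewrite E inE aT aD.
    by rewrite inE mem_tp_imset /tp eqxx (negbTE bD) andbF.
  apply/subsetP => k; rewrite inE => /andP [kT kD'].
  by have [kD _] := Hb k kD' kT; rewrite inE kT kD.
move=> x y; rewrite -(@reduced_swap D a b A x y sA) -(@reduced_swap D a b B x y sB).
exact: HD'.
Qed.

End Marg.

Section Conn.
Variable R : realType.
Local Notation C := R[i].
Variable n : nat.
Implicit Types (A B : Op R n) (S D T : {set 'I_n}) (x y c e : bits n).

Definition inv1 A (i j : 'I_n) := forall x y, A (swap_bits i j x) y = A x y.

Lemma tp_sym (i j : 'I_n) : tp i j =1 tp j i.
Proof.
move=> k; rewrite /tp; case: (eqVneq k i) => ki; case: (eqVneq k j) => kj //=.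
by rewrite -ki -kj.
Qed.

Lemma inv1_sym A (i j : 'I_n) : inv1 A i j -> inv1 A j i.
Proof.
move=> H x y; rewrite -[RHS](H x y); congr (A _ y); apply/ffunP => k.
by rewrite !swap_bitsE tp_sym.
Qed.

Lemma tp_comp (i j k : 'I_n) : i != j -> j != k -> i != k ->
  forall l, tp i k l = tp i j (tp j k (tp i j l)).
Proof.
move=> ij jk ik l.
have ji : j != i by rewrite eq_sym.
have kj : k != j by rewrite eq_sym.
have ki : k != i by rewrite eq_sym.
case: (eqVneq l i) => [->|li].
  by do 4 rewrite /tp ?eqxx ?(negbTE ij) ?(negbTE ji) ?(negbTE jk) ?(negbTE kj) ?(negbTE ik) ?(negbTE ki) /=.
case: (eqVneq l j) => [->|lj].
  by do 4 rewrite /tp ?eqxx ?(negbTE ij) ?(negbTE ji) ?(negbTE jk) ?(negbTE kj) ?(negbTE ik) ?(negbTE ki) /=.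
case: (eqVneq l k) => [->|lk].
  by do 4 rewrite /tp ?eqxx ?(negbTE ij) ?(negbTE ji) ?(negbTE jk) ?(negbTE kj) ?(negbTE ik) ?(negbTE ki) /=.
by rewrite !tp_out.
Qed.

Lemma inv1_trans A (i j k : 'I_n) : inv1 A i j -> inv1 A j k -> inv1 A i k.
Proof.
move=> H1 H2.
case: (eqVneq i j) => [E|ij]; first by rewrite E.
case: (eqVneq j k) => [E|jk]; first by rewrite -E.
case: (eqVneq i k) => [E|ik]; first by rewrite -E => x y; rewrite swap_bits_id.
move=> x y.
have -> : swap_bits i k x = swap_bits i j (swap_bits j k (swap_bits i j x)).
  by apply/ffunP => l; rewrite !swap_bitsE (tp_comp ij jk ik).
by rewrite H1 H2 H1.
Qed.

Lemma connect_inv (Ss : {set {set 'I_n}}) A : hconnected Ss ->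
  (forall S, S \in Ss -> forall i j, i \in S -> j \in S -> inv1 A i j) ->
  forall i j, inv1 A i j.
Proof.
move=> Hc HS.
suff H0 : forall i0 j, inv1 A i0 j.
  by move=> i j; exact: H0.
move=> i0.
pose X := [set k | `[< inv1 A i0 k >] ].
have HX : forall k, (k \in X) <-> inv1 A i0 k by move=> k; rewrite inE asboolE.
suff XT : X = setT by move=> j; apply/HX; rewrite XT inE.
apply/eqP; apply: contraT => XnT.
have X0 : X != set0.
  apply/set0Pn; exists i0; apply/HX => x y; by rewrite swap_bits_id.
have Y0 : ~: X != set0.
  apply/set0Pn; move: XnT; rewrite eqEsubset subsetT /= => /subsetPn [k _ kX].
  by exists k; rewrite inE.
have [S SSs /andP [SX SY]] := Hc X (~: X) X0 Y0 (setICr X) (setUCr X).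
case/set0Pn: SX => j; rewrite in_setI => /andP [jS jX].
case/set0Pn: SY => k; rewrite in_setI in_setC => /andP [kS kX].
case/negP: kX; apply/HX.
exact: (inv1_trans (proj1 (HX j) jX) (HS S SSs j k jS kS)).
Qed.

Lemma Dq_zero A (i j : 'I_n) : inv1 A i j -> Dq i j A = 0.
Proof. by move=> H; rewrite /Dq big1 // => x _; rewrite H subrr. Qed.

Lemma inv_from_marg S A B (i j : 'I_n) : hermitian A -> psd A -> inv1 B i j ->
  i \in S -> j \in S -> same_marginal S A B -> inv1 A i j.
Proof.
move=> Ah Ap HB iS jS H.
have [m [p [u [p0 EA]]]] := decomp Ah Ap.
have D0 : Dq i j A = 0 by rewrite (Dq_same iS jS H) Dq_zero.
have Hu := inv_from_D (swap_bitsK i j) p0 EA D0.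
move=> x y; rewrite !EA; apply: eq_bigr => k _.
have [->|pk] := eqVneq (p k) 0; first by rewrite !mul0r.
by rewrite Hu.
Qed.

Lemma sym2_from_inv A : hermitian A -> (forall i j, inv1 A i j) -> sym2 A.
Proof.
move=> Ah H i j x y.
by rewrite H Ah H -Ah.
Qed.

Lemma symmetric_inv A : symmetric_state A -> forall i j, inv1 A i j.
Proof.
move=> H i j x y.
move: (H (fun y' => (y' == y)%:R) i j x); rewrite /apply_op.
have E : forall F : bits n -> C, \sum_y0 F y0 * (y0 == y)%:R = F y.
  move=> F; rewrite (bigD1 y) //= eqxx mulr1 big1 ?addr0 // => y' /negbTE ->; by rewrite mulr0.
by rewrite !E.
Qed.

End Conn.

Section Prod.
Variable R : realType.
Local Notation C := R[i].
Variable n : nat.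
Implicit Types (A B : {set 'I_n}) (S T : {set 'I_n}) (x y z c e : bits n) (psi : Vec R n).

Lemma prod_E T psi : product_wrt T psi ->
  forall x y, psi x * psi y = psi (merge T x y) * psi (merge T y x).
Proof.
move=> [a [b [Ha Hb Hp]]] x y; rewrite !Hp.
have a1 : a (merge T x y) = a x by apply: Ha => k kT; rewrite mergeE kT.
have a2 : a (merge T y x) = a y by apply: Ha => k kT; rewrite mergeE kT.
have b1 : b (merge T x y) = b y by apply: Hb => k; rewrite inE mergeE => /negbTE ->.
have b2 : b (merge T y x) = b x by apply: Hb => k; rewrite inE mergeE => /negbTE ->.
rewrite a1 a2 b1 b2.
by rewrite mulrACA [RHS]mulrACA [b y * b x]mulrC.
Qed.

Lemma F_prod T psi z : psi z != 0 ->
  (forall x, psi x * psi z = psi (merge T x z) * psi (merge T z x)) -> product_wrt T psi.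
Proof.
move=> pz H.
exists (fun x => psi (merge T x z)), (fun x => psi (merge T z x) / psi z); split.
- move=> x y Hxy; congr (psi _); apply/ffunP => k; rewrite !mergeE.
  by case kT: (k \in T) => //; rewrite Hxy.
- move=> x y Hxy; congr (psi _ / _); apply/ffunP => k; rewrite !mergeE.
  by case kT: (k \in T) => //; rewrite Hxy // inE kT.
- by move=> x; rewrite mulrA -H mulfK.
Qed.

Lemma prod_compl T psi : product_wrt T psi -> product_wrt (~: T) psi.
Proof.
move=> [a [b [Ha Hb Hp]]]; exists b, a; split => //; first by rewrite setCK.
by move=> x; rewrite mulrC.
Qed.

Lemma prod_inter A B psi z : psi z != 0 -> product_wrt A psi -> product_wrt B psi ->
  product_wrt (A :&: B) psi.
Proof.
move=> cz PA PB; apply: (F_prod cz) => x.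
have EA := prod_E PA; have EB := prod_E PB.
set w := merge (A :&: B) z x.
have h1 := EB x z.
have h2 := EA (merge B x z) z.
have h3 := EB w z.
have I1 : merge A (merge B x z) z = merge (A :&: B) x z.
  by apply/ffunP => k; rewrite !mergeE !inE; case: (k \in A); case: (k \in B).
have I2 : merge A z (merge B x z) = merge B w z.
  by apply/ffunP => k; rewrite !mergeE !inE; case: (k \in A); case: (k \in B).
have I3 : merge B z w = merge B z x.
  by apply/ffunP => k; rewrite !mergeE !inE; case: (k \in A); case: (k \in B).
rewrite I1 I2 in h2; rewrite I3 in h3.
apply: (mulIf cz).
by rewrite h1 mulrAC h2 -mulrA -h3 mulrA.
Qed.

Lemma prod_union A B psi z : psi z != 0 -> product_wrt A psi -> product_wrt B psi ->
  product_wrt (A :|: B) psi.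
Proof.
move=> cz PA PB.
have := prod_compl (prod_inter cz (prod_compl PA) (prod_compl PB)).
by rewrite setCI !setCK.
Qed.

Lemma prod_swap T psi (i j : 'I_n) : (forall x, psi (swap_bits i j x) = psi x) ->
  product_wrt T psi -> product_wrt (tp i j @: T) psi.
Proof.
move=> Hs [a [b [Ha Hb Hp]]].
exists (fun x => a (swap_bits i j x)), (fun x => b (swap_bits i j x)); split.
- move=> x y Hxy; apply: Ha => k kT; rewrite !swap_bitsE; apply: Hxy.
  by rewrite mem_tp_imset tpK.
- move=> x y Hxy; apply: Hb => k; rewrite inE => kT; rewrite !swap_bitsE; apply: Hxy.
  by rewrite inE mem_tp_imset tpK.
- by move=> x; rewrite -Hp Hs.
Qed.

Lemma prod_set0 psi : product_wrt set0 psi.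
Proof.
exists (fun _ => 1), psi; split => //; last by move=> x; rewrite mul1r.
move=> x y Hxy; congr (psi _); apply/ffunP => k; apply: Hxy; by rewrite inE in_set0.
Qed.

Lemma prod_single psi z (k : 'I_n) : psi z != 0 ->
  (forall i j x, psi (swap_bits i j x) = psi x) ->
  forall T, product_wrt T psi -> k \in T -> T != setT -> product_wrt [set k] psi.
Proof.
move=> cz Hs T.
move: {2}#|T| (leqnn #|T|) => m; elim: m T => [|m IH] T.
  by rewrite leqn0 cards_eq0 => /eqP -> _; rewrite in_set0.
move=> Hm PT kT TnT.
have [T1|T1] := eqVneq #|T| 1%N.
  by move/eqP/cards1P: T1 => [k' Ek']; move: kT PT; rewrite Ek' inE => /eqP ->.
have [l lT lk] : exists2 l, l \in T & l != k.
  have : (0 < #|T :\ k|)%N.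
    rewrite (cardsD1 k T) kT in T1 Hm *.
    by rewrite lt0n; move: T1; rewrite add1n; case: (#|T :\ k|).
  case/card_gt0P => l; rewrite !inE => /andP [lk lT]; by exists l.
have [m0 m0T] : exists m0, m0 \notin T.
  move: TnT; rewrite eqEsubset subsetT /= => /subsetPn [m0 _ H]; by exists m0.
set T' := T :&: (tp l m0 @: T).
have PT' : product_wrt T' psi by apply: prod_inter cz PT (prod_swap (Hs l m0) PT).
have m0k : k != m0 by apply/eqP => E; rewrite -E kT in m0T.
have kT' : k \in T'.
  by rewrite inE kT mem_tp_imset tp_out // eq_sym.
apply: (IH T') => //.
- rewrite -ltnS; apply: leq_trans Hm; apply: proper_card.
  rewrite properEneq subsetIl andbT; apply/eqP => E.
  have : l \in T' by rewrite E.
  by rewrite inE mem_tp_imset /tp eqxx (negbTE m0T) andbF.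
- apply/eqP => E; move: m0T; have : m0 \in T' by rewrite E inE.
  by rewrite inE => /andP [->].
Qed.

Lemma sym_prod_full psi z S : psi z != 0 ->
  (forall i j x, psi (swap_bits i j x) = psi x) -> proper_nonempty S -> product_wrt S psi ->
  forall T, product_wrt T psi.
Proof.
move=> cz Hs /andP [S0 ST] PS.
have single : forall k, product_wrt [set k] psi.
  move=> k; case kS: (k \in S).
    exact: (prod_single cz Hs PS kS ST).
  apply: (prod_single cz Hs (prod_compl PS)); first by rewrite inE kS.
  apply/eqP => E; move/negP: S0; apply; apply/eqP; by rewrite -[S]setCK E setCT.
move=> T; move: {2}#|T| (leqnn #|T|) => m; elim: m T => [|m IH] T.
  rewrite leqn0 cards_eq0 => /eqP ->; exact: prod_set0.
move=> Hm.
have [->|/set0Pn [k kT]] := eqVneq T set0; first exact: prod_set0.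
rewrite -(setD1K kT); apply: prod_union cz (single k) (IH _ _).
by move: Hm; rewrite (cardsD1 k T) kT add1n ltnS.
Qed.

End Prod.

Section CC.
Variable R : realType.
Local Notation C := R[i].
Variable n : nat.
Implicit Types (A B : Op R n) (S T X : {set 'I_n}) (x y z c e : bits n) (psi : Vec R n).

Lemma normalized_nz psi : normalized psi -> exists z, psi z != 0.
Proof.
move=> Hn; case: (pickP (fun z => psi z != 0)) => [z Hz|H]; first by exists z.
move: Hn; rewrite /normalized big1 => [/eqP|x _]; first by rewrite eq_sym oner_eq0.
by move: (H x) => /negbFE/eqP ->; rewrite mulr0.
Qed.

Lemma cc_density (P : Vec R n -> Prop) A : (forall psi, P psi -> normalized psi) ->
  convex_comb_of P A -> density A.
Proof.
move=> PN [m [p [psi [p0 p1 Pp EA]]]]; split; [|split].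
- move=> x y; rewrite !EA conjcE rmorph_sum; apply: eq_bigr => k _.
  rewrite /proj ?conjcE rmorphM /= rmorphM /= conjCK (geC0_conj (p0 k)).
  by rewrite [(psi k x)^* * _]mulrC.
- move=> v.
  have -> : \sum_x \sum_y (v x)^* * A x y * v y =
     \sum_k p k * ((\sum_x (v x)^* * psi k x) * (\sum_x (v x)^* * psi k x)^*).
    under eq_bigr => x _ do under eq_bigr => y _ do rewrite EA mulr_sumr mulr_suml.
    under eq_bigr => x _ do rewrite exchange_big /=.
    rewrite exchange_big /=; apply: eq_bigr => k _.
    rewrite rmorph_sum mulr_suml mulr_sumr; apply: eq_bigr => x _.
    rewrite mulr_sumr mulr_sumr; apply: eq_bigr => y _.
    rewrite /proj ?conjcE rmorphM /= conjCK.
    ring.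
  apply: sumr_ge0 => k _; apply: mulr_ge0 => //; exact: mul_conjC_ge0.
- rewrite /trace; under eq_bigr do rewrite EA.
  rewrite exchange_big /= -p1; apply: eq_bigr => k _.
  have Nk := PN _ (Pp k); rewrite -mulr_sumr; under eq_bigr do rewrite /proj mulrC.
  by rewrite Nk mulr1.
Qed.


Lemma sym_GME (rho : Op R n) : entangled rho -> (forall i j, inv1 rho i j) -> genuinely_entangled rho.
Proof.
move=> Hent Hinv [m [p [psi [p0 p1 Pb Er]]]]; apply: Hent.
have Hs : forall k, p k != 0 -> forall i j x, psi k (swap_bits i j x) = psi k x.
  move=> k pk i j x.
  exact: (inv_from_D (swap_bitsK i j) p0 Er (Dq_zero (Hinv i j)) pk).
have full : forall k, p k != 0 -> fully_separable_pure (psi k).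
  move=> k pk; have [Hn [S [SP PS]]] := Pb k; split => // T _.
  have [z pz] := normalized_nz Hn.
  exact: (sym_prod_full pz (Hs k pk) SP PS T).
have [k0 pk0] : exists k0, p k0 != 0.
  case: (pickP (fun k => p k != 0)) => [k0 H|H]; first by exists k0.
  move: p1; rewrite big1 => [/eqP|k _]; first by rewrite eq_sym oner_eq0.
  by move: (H k) => /negbFE/eqP.
exists m, p, (fun k => if p k == 0 then psi k0 else psi k); split => //.
  by move=> k; case: eqP => [_|/eqP pk]; [exact: full | exact: full].
move=> x y; rewrite Er; apply: eq_bigr => k _; case: eqP => [->|] //.
by rewrite !mul0r.
Qed.

Lemma cc_build (I : finType) (w : I -> C) (phi : I -> Vec R n) (P : Vec R n -> Prop) A :
  (forall i, 0 <= w i) ->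
  (forall x y, A x y = \sum_i w i * (phi i x * (phi i y)^*)) ->
  trace A = 1 ->
  (forall i (a : C), normalized (fun x => a * phi i x) -> P (fun x => a * phi i x)) ->
  convex_comb_of P A.
Proof.
move=> w0 EA tr1 HP.
pose N i := \sum_x phi i x * (phi i x)^*.
have N0 : forall i, 0 <= N i.
  by move=> i; apply: sumr_ge0 => x _; exact: mul_conjC_ge0.
pose a i := (sqrtC (N i))^-1.
have aa : forall i, N i != 0 -> a i * (a i)^* * N i = 1.
  move=> i Ni; have sg : 0 <= sqrtC (N i) by rewrite sqrtC_ge0.
  rewrite /a fmorphV /= (geC0_conj sg).
  by rewrite -invfM -expr2 sqrtCK mulVf.
have tr : \sum_i w i * N i = 1.
  rewrite -tr1 /trace; under [RHS]eq_bigr do rewrite EA.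
  rewrite [RHS]exchange_big; apply: eq_bigr => i _; by rewrite mulr_sumr.
have [i0 Hi0] : exists i0, w i0 * N i0 != 0.
  case: (pickP (fun i => w i * N i != 0)) => [i0 H|H]; first by exists i0.
  move: tr; rewrite big1 => [/eqP|i _]; first by rewrite eq_sym oner_eq0.
  by move: (H i) => /negbFE/eqP.
pose j i := if w i * N i == 0 then i0 else i.
have wNj : forall i, w (j i) * N (j i) != 0.
  by move=> i; rewrite /j; case: (eqVneq (w i * N i) 0) => H /=.
pose psi i x := a (j i) * phi (j i) x.
pose p i := w i * N i.
have normpsi : forall i, normalized (psi i).
  move=> i; rewrite /normalized /psi.
  have Nj : N (j i) != 0 by move: (wNj i); rewrite mulf_eq0 negb_or => /andP [].
  rewrite -(aa _ Nj) /N mulr_sumr; apply: eq_bigr => x _.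
  rewrite ?conjcE rmorphM /=; ring.
exists #|I|, (fun k => p (enum_val k)), (fun k => psi (enum_val k)); split.
- move=> k; apply: mulr_ge0; [exact: w0 | exact: N0].
- by rewrite -(sum_enum p).
- move=> k; exact: HP (normpsi _).
move=> x y; rewrite -(sum_enum (fun i => p i * proj (psi i) x y)) EA; apply: eq_bigr => i _.
rewrite /p /proj /psi.
case: (eqVneq (w i * N i) 0) => H.
  rewrite H mul0r; move/eqP: H; rewrite mulf_eq0 => /orP [/eqP ->|/eqP HN]; first by rewrite mul0r.
  have phi0 : forall x, phi i x = 0.
    move=> z; apply/eqP; rewrite -mul_conjC_eq0; apply/eqP.
    apply: (psumr_eq0P _ HN) => // t _; exact: mul_conjC_ge0.
  by rewrite phi0 mul0r mulr0.
have -> : j i = i by rewrite /j (negbTE H).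
have Ni : N i != 0 by move: H; rewrite mulf_eq0 negb_or => /andP [].
have := aa i Ni.
rewrite ?conjcE rmorphM /= => E.
transitivity (w i * (phi i x * (phi i y)^*) * (a i * (a i)^* * N i)); first by rewrite E mulr1.
ring.
Qed.

End CC.

Section PM.
Variable R : realType.
Local Notation C := R[i].
Variable n : nat.
Implicit Types (A B : Op R n) (S T X : {set 'I_n}) (x y z c e : bits n) (psi : Vec R n).

Definition prodmarg X A : Op R n := fun x y => reduced X A x y * reduced (~: X) A x y.

Lemma trace_marg X A : trace A = \sum_(e | zeroOn (~: X) e) reduced X A e e.
Proof. by rewrite /trace (sum_split0 X). Qed.

Lemma reduced_dep X A x x' y y' : (forall k, k \in X -> x k = x' k) ->
  (forall k, k \in X -> y k = y' k) -> reduced X A x y = reduced X A x' y'.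
Proof.
move=> Hx Hy; rewrite /reduced; apply: eq_bigr => c _.
congr (A _ _); apply/ffunP => k; rewrite !mergeE; case kX: (k \in X) => //.
  by rewrite Hx. by rewrite Hy.
Qed.

Lemma prodmarg_marg X A : trace A = 1 -> same_marginal X (prodmarg X A) A.
Proof.
move=> tr x y.
have -> : reduced X (prodmarg X A) x y =
   \sum_(c | zeroOn X c) prodmarg X A (merge X x c) (merge X y c) by [].
have E : forall c, zeroOn X c ->
   prodmarg X A (merge X x c) (merge X y c) = reduced X A x y * reduced (~: X) A c c.
  move=> c _; rewrite /prodmarg; congr (_ * _).
    by apply: reduced_dep => k kX; rewrite mergeE kX.
  by apply: reduced_dep => k; rewrite inE mergeE => /negbTE ->.
rewrite (eq_bigr _ E) -mulr_sumr.
have -> : \sum_(c | zeroOn X c) reduced (~: X) A c c = 1.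
  by rewrite -tr (trace_marg (~: X)) setCK.
by rewrite mulr1.
Qed.

Lemma prodmargC X A : prodmarg (~: X) A = prodmarg X A.
Proof. by apply: funext => x; apply: funext => y; rewrite /prodmarg setCK mulrC. Qed.

Lemma reduced_as_sum X m (p : 'I_m -> C) (u : 'I_m -> Vec R n) A :
  (forall x y, A x y = \sum_(k < m) p k * (u k x * (u k y)^*)) ->
  forall x y, reduced X A x y = \sum_(kc : 'I_m * bits n)
     (zeroOn X kc.2)%:R * p kc.1 * (u kc.1 (merge X x kc.2) * (u kc.1 (merge X y kc.2))^*).
Proof.
move=> EA x y; rewrite -(pair_bigA _ (fun k c => (zeroOn X c)%:R * p k * (u k (merge X x c) * (u k (merge X y c))^*))) /= exchange_big /= /reduced big_mkcond /=.
apply: eq_bigr => c _; case: ifP => H.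
  rewrite EA; apply: eq_bigr => k _; by rewrite (_ : zeroOn X c = true) // mul1r.
rewrite big1 // => k _; by rewrite (_ : zeroOn X c = false) // !mul0r.
Qed.

Lemma prodmarg_cc X A : density A -> proper_nonempty X ->
  convex_comb_of (@biseparable_pure R n) (prodmarg X A).
Proof.
move=> [Ah [Ap tr]] PX.
have [m [p [u [p0 EA]]]] := decomp Ah Ap.
pose w (i : ('I_m * bits n) * ('I_m * bits n)) :=
  (zeroOn X i.1.2)%:R * p i.1.1 * ((zeroOn (~: X) i.2.2)%:R * p i.2.1).
pose phi (i : ('I_m * bits n) * ('I_m * bits n)) x :=
  u i.1.1 (merge X x i.1.2) * u i.2.1 (merge (~: X) x i.2.2).
apply: (@cc_build _ _ _ w phi).
- move=> i; apply: mulr_ge0; apply: mulr_ge0 => //; exact: ler0n.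
- move=> x y; rewrite /prodmarg !(reduced_as_sum _ EA) mulr_suml.
  under eq_bigr do rewrite mulr_sumr.
  rewrite pair_bigA; apply: eq_bigr => [[[k c] [l d]]] _.
  rewrite /w /phi /= ?conjcE rmorphM /=; ring.
- by rewrite (trace_marg X) -tr (trace_marg X); apply: eq_bigr => e _; rewrite prodmarg_marg.
- move=> i a Hn; split => //; exists X; split => //.
  exists (fun x => a * u i.1.1 (merge X x i.1.2)), (fun x => u i.2.1 (merge (~: X) x i.2.2)).
  split.
  + move=> x y Hxy; congr (_ * u _ _); apply/ffunP => k; rewrite !mergeE.
    by case kX: (k \in X) => //; rewrite Hxy.
  + move=> x y Hxy; congr (u _ _); apply/ffunP => k; rewrite !mergeE.
    by case kX: (k \in ~: X) => //; rewrite Hxy.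
  + by move=> x; rewrite /phi mulrA.
Qed.

Lemma prodmarg_good (Ss : {set {set 'I_n}}) X A : density A -> proper_nonempty X ->
  (forall S, S \in Ss -> S \subset X \/ S \subset ~: X) ->
  compatible A Ss (prodmarg X A) /\ biseparable (prodmarg X A).
Proof.
move=> dA PX HS.
have cc := prodmarg_cc dA PX.
split => //; split.
  by apply: (cc_density _ cc) => psi [].
have tr : trace A = 1 by case: dA => _ [].
move=> S SSs; case: (HS S SSs) => sub.
  exact: same_marg_sub sub (prodmarg_marg X tr).
by apply: same_marg_sub sub _; rewrite -prodmargC; exact: prodmarg_marg.
Qed.

End PM.

Section Fin.
Variable n : nat.

Lemma my_bigmin_le (Pr : {set {set 'I_n}} -> Prop) D : Pr D ->
  (\big[minn/n]_(Ss : {set {set 'I_n}} | `[< Pr Ss >]) max_size Ss <= max_size D)%N.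
Proof.
move=> PD.
have : D \in index_enum {set {set 'I_n}} by rewrite mem_index_enum.
elim: (index_enum _) => [//|a r IH]; rewrite inE big_cons => /orP [/eqP <-|Dr].
  by rewrite ifT; [exact: geq_minl | exact/asboolP].
by case: ifP => _; [apply: leq_trans (geq_minr _ _) (IH Dr) | exact: IH].
Qed.

Lemma max_size_T : max_size [set [set: 'I_n]] = n.
Proof. by rewrite /max_size big_set1 cardsT card_ord. Qed.

Lemma bigmin_attained (Pr : {set {set 'I_n}} -> Prop) : Pr [set setT] ->
  exists2 D, Pr D & \big[minn/n]_(Ss : {set {set 'I_n}} | `[< Pr Ss >]) max_size Ss = max_size D.
Proof.
move=> PT.
have PT' : `[< Pr [set setT] >] by apply/asboolP.
case: (@arg_minnP _ [set setT] (fun D : {set {set 'I_n}} => `[< Pr D >]) (fun D : {set {set 'I_n}} => max_size D) PT') => D PD Dmin.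
exists D; first exact/asboolP.
apply/eqP; rewrite eqn_leq my_bigmin_le /=; last exact/asboolP.
apply: (big_ind (fun v => max_size D <= v)%N).
- by rewrite -{2}max_size_T; exact: Dmin.
- by move=> a b Ha Hb; rewrite leq_min Ha Hb.
- by move=> S HS; exact: Dmin.
Qed.

Lemma card_le_max (Ss : {set {set 'I_n}}) S : S \in Ss -> (#|S| <= max_size Ss)%N.
Proof. by move=> SS; rewrite /max_size; apply: leq_bigmax_cond. Qed.

Lemma max_attained (Ss : {set {set 'I_n}}) : Ss != set0 -> exists2 S, S \in Ss & max_size Ss = #|S|.
Proof.
move=> S0; have : (0 < #|Ss|)%N by rewrite card_gt0.
by case/(eq_bigmax_cond (fun S : {set 'I_n} => #|S|)) => S SS E; exists S.
Qed.

Lemma hconnected_nonempty (Ss : {set {set 'I_n}}) : (2 <= n)%N -> hconnected Ss -> Ss != set0.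
Proof.
move=> n2 Hc.
pose a : 'I_n := Ordinal (leq_trans (isT : (0 < 2)%N) n2).
pose b : 'I_n := Ordinal (leq_trans (isT : (1 < 2)%N) n2).
have ab : a != b by [].
have a0 : [set a] != set0 by apply/set0Pn; exists a; rewrite inE.
have b0 : ~: [set a] != set0 by apply/set0Pn; exists b; rewrite !inE eq_sym.
have [S SS _] := Hc [set a] (~: [set a]) a0 b0 (setICr _) (setUCr _).
by apply/set0Pn; exists S.
Qed.

End Fin.

Section Main.
Variable R : realType.
Local Notation C := R[i].
Variable n : nat.
Implicit Types (A B : Op R n) (S T X : {set 'I_n}).

Lemma reduced_T A x y : reduced setT A x y = A x y.
Proof.
rewrite /reduced (big_pred1 (z0 n)).
  by congr (A _ _); apply/ffunP => k; rewrite mergeE inE.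
move=> c; apply/idP/idP.
  move/forallP => H; apply/eqP/ffunP => k; move: (H k); rewrite inE ffunE /=.
  by move/negbTE.
move=> Hc; apply/forallP => k; move: Hc; rewrite /= => /eqP ->; by rewrite /z0 ffunE implybT.
Qed.

Lemma determines_T A : determines [set setT] A.
Proof.
move=> sigma [_ H]; apply: funext => x; apply: funext => y.
by rewrite -(reduced_T sigma) (H setT) ?inE // reduced_T.
Qed.

Lemma not_conn_sep (Ss : {set {set 'I_n}}) A : density A ->
  (forall sigma, compatible A Ss sigma -> ~ biseparable sigma) -> hconnected Ss.
Proof.
move=> dA H X Y X0 Y0 XY XUY.
case: (boolP [exists S in Ss, (S :&: X != set0) && (S :&: Y != set0)]).
  by case/exists_inP => S SS HS; exists S.
move=> Hn; exfalso.
have YE : Y = ~: X.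
  apply/setP => k; rewrite inE; apply/idP/idP => kY.
    apply/negP => kX; move/setP: XY => /(_ k); by rewrite !inE kX kY.
  move/setP: XUY => /(_ k); rewrite !inE (negbTE kY) /= => ->; done.
have PX : proper_nonempty X.
  rewrite /proper_nonempty X0 /=; apply/eqP => E; move: Y0; rewrite YE E setCT.
  by rewrite eqxx.
have HS : forall S, S \in Ss -> S \subset X \/ S \subset ~: X.
  move=> S SS; move/exists_inP: Hn => Hn.
  case: (eqVneq (S :&: X) set0) => SX.
    right; apply/subsetP => k kS; rewrite inE; apply/negP => kX.
    by move/setP: SX => /(_ k); rewrite !inE kS kX.
  case: (eqVneq (S :&: Y) set0) => SY.
    left; apply/subsetP => k kS; apply/negPn/negP => kX.
    by move/setP: SY => /(_ k); rewrite YE !inE kS kX.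
  by exfalso; apply: Hn; exists S => //; rewrite SX SY.
have [cmp bis] := prodmarg_good dA PX HS.
exact: H cmp bis.
Qed.

End Main.

Unset Implicit Arguments. Set Strict Implicit.
Theorem proposition3 (R : realType) (n : nat) (rho : Op R n) :
  (2 <= n)%N -> density rho -> entangled rho -> symmetric_state rho ->
  forall Ss : {set {set 'I_n}},
    (determines Ss rho <->
       hconnected Ss /\ exists2 S, S \in Ss & (Lmin rho <= #|S|)%N) /\
    (detects_GME Ss rho <->
       hconnected Ss /\ exists2 S, S \in Ss & (lmin rho <= #|S|)%N).
Proof.
move=> n2 dr ent symr Ss.
have rinv := symmetric_inv symr.
have [rh [rp rt]] := dr.
have rsym := sym2_from_inv rh rinv.
have gme := sym_GME ent rinv.
have symc : forall (Ts : {set {set 'I_n}}) sigma, hconnected Ts -> compatible rho Ts sigma -> sym2 sigma.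
  move=> Ts sigma Hc [[sh [sp st]] Hm].
  apply: (sym2_from_inv sh).
  apply: (connect_inv Hc) => S SS i j iS jS.
  exact: (inv_from_marg sh sp (rinv i j) iS jS (Hm S SS)).
have transfer : forall (Ts : {set {set 'I_n}}) sigma D, hconnected Ts -> compatible rho Ts sigma ->
   forall T, T \in Ts -> (max_size D <= #|T|)%N -> compatible rho D sigma.
  move=> Ts sigma D Hc cs T TS Hle; split; first by case: cs.
  move=> S' S'D; apply: (same_marg_card (symc _ _ Hc cs) rsym (cs.2 T TS)).
  exact: leq_trans (card_le_max S'D) Hle.
have sizeS : forall (Ts : {set {set 'I_n}}), hconnected Ts -> forall m,
    (m <= max_size Ts)%N -> exists2 S, S \in Ts & (m <= #|S|)%N.
  move=> Ts Hc m Hm; have [S SS E] := max_attained (hconnected_nonempty n2 Hc).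
  by exists S => //; rewrite -E.
split; split.
- move=> Hd.
  have Hc : hconnected Ss.
    apply: (not_conn_sep dr) => sigma cs bs; apply: gme; by rewrite -(Hd sigma cs).
  split => //; apply: (sizeS _ Hc).
  exact: (@my_bigmin_le n (fun D => determines D rho) Ss Hd).
- move=> [Hc [T TS HT]] sigma cs.
  have [D HD ED] := @bigmin_attained n (fun D => determines D rho) (@determines_T R n rho).
  apply: HD; apply: (transfer Ss sigma D Hc cs T TS).
  by rewrite -ED.
- move=> Hd.
  have Hc : hconnected Ss by apply: (not_conn_sep dr) => sigma cs; exact: Hd sigma cs.
  split => //; apply: (sizeS _ Hc).
  exact: (@my_bigmin_le n (fun D => detects_GME D rho) Ss Hd).
- move=> [Hc [T TS HT]] sigma cs.
  have dT : detects_GME [set setT] rho.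
    by move=> s cs'; rewrite (@determines_T R n rho s cs').
  have [D HD ED] := @bigmin_attained n (fun D => detects_GME D rho) dT.
  apply: HD; apply: (transfer Ss sigma D Hc cs T TS).
  by rewrite -ED.
Qed.
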